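(* Let $(X,\mathsf{d}_X)$ be a compact metric space, $\mathfrak{A}$ a unital C*-algebra, and $\varphi$ a state of $C(X,\mathfrak{A})$. Let $\|\cdot\|_{\mathsf{n}}$ be a norm on $\mathfrak{A}$ (over $\mathbb{R}$ or $\mathbb{C}$) with $M,N>0$ such that $M\|\cdot\|_{\mathsf{n}}\le\|\cdot\|_{\mathfrak{A}}\le N\|\cdot\|_{\mathsf{n}}$. Let $\mathcal{S}$ denote the state space of $C(X,\mathfrak{A})$. Then: (1)(a) if $q=C(X)$, then $\sup_{\mu,\nu\in\mathcal{S}}\mathrm{mk}_{\mathsf{L}^{(\mathsf{n}),q}_{\mathsf{d}_X}}(\mu,\nu)\le 2+N\cdot\mathrm{diam}(X,\mathsf{d}_X)$; (1)(b) if $q=C(X)$ and $\mathfrak{A}=\mathbb{C}$, then $\sup_{\mu,\nu\in\mathcal{S}}\mathrm{mk}_{\mathsf{L}^{(\mathsf{n}),q}_{\mathsf{d}_X}}(\mu,\nu)\le N\cdot\mathrm{diam}(X,\mathsf{d}_X)$; (2) if $q=\mathbb{C}$ or $q=\varphi$, then $\sup_{\mu,\nu\in\mathcal{S}}\mathrm{mk}_{\mathsf{L}^{(\mathsf{n}),q}_{\mathsf{d}_X}}(\mu,\nu)\le 2$.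
   Context: $C(X,\mathfrak{A})$ is the unital C*-algebra of continuous $\mathfrak{A}$-valued functions on $X$ (pointwise operations, supremum norm, unit constant $1_{\mathfrak{A}}$); $C(X,\mathbb{C}1_{\mathfrak{A}})$ is the subalgebra of functions with values in $\mathbb{C}1_{\mathfrak{A}}$. For $a\in C(X,\mathfrak{A})$, $l^{(\mathsf{n})}_{\mathsf{d}_X}(a)=\sup_{x\ne y}\|a(x)-a(y)\|_{\mathsf{n}}/\mathsf{d}_X(x,y)$; $\mathsf{L}^{(\mathsf{n}),C(X)}_{\mathsf{d}_X}(a)=\max\{l^{(\mathsf{n})}_{\mathsf{d}_X}(a),\inf_{b\in C(X,\mathbb{C}1_{\mathfrak{A}})}\|a-b\|\}$, $\mathsf{L}^{(\mathsf{n}),\mathbb{C}}_{\mathsf{d}_X}(a)=\max\{l^{(\mathsf{n})}_{\mathsf{d}_X}(a),\inf_{\lambda\in\mathbb{C}}\|a-\lambda1\|\}$, $\mathsf{L}^{(\mathsf{n}),\varphi}_{\mathsf{d}_X}(a)=\max\{l^{(\mathsf{n})}_{\mathsf{d}_X}(a),\|a-\varphi(a)1\|\}$ (supremum norms). For a seminorm $\mathsf{L}$ and states $\mu,\nu$, $\mathrm{mk}_{\mathsf{L}}(\mu,\nu)=\sup\{|\mu(a)-\nu(a)|: a=a^*,\ \mathsf{L}(a)\le1\}$. $\mathrm{diam}(X,\mathsf{d}_X)=\sup_{x,y}\mathsf{d}_X(x,y)$. *)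

(* Defs.v *)
From HB Require Import structures.
From mathcomp Require Import all_boot all_order all_algebra.
From mathcomp Require Import complex.
From mathcomp Require Import all_classical all_reals.
From mathcomp Require Import ereal.
Import Order.TTheory GRing.Theory Num.Theory.
Set Implicit Arguments. Unset Strict Implicit. Unset Printing Implicit Defensive.
Local Open Scope ring_scope.
Local Open Scope classical_set_scope.

Definition cabs (R : realType) (z : R[i]) : R := Normc.normc z.
Definition rC (R : realType) (r : R) : R[i] := real_complex R r.

Definition is_unital_Cstar (R : realType) (A : algType R[i])
  (star : A -> A) (nrm : A -> R) : Prop :=
  [/\
      [/\ (forall a, nrm a = 0 -> a = 0),
      (forall (z : R[i]) a, nrm (z *: a) = cabs z * nrm a),
      (forall a b, nrm (a + b) <= nrm a + nrm b) &
      (forall a b, nrm (a * b) <= nrm a * nrm b)],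
      [/\ forall a b, star (a + b) = star a + star b,
          forall (z : R[i]) a, star (z *: a) = z^* *: star a,
          forall a b, star (a * b) = star b * star a &
          forall a, star (star a) = a],
      (forall a, nrm (star a * a) = nrm a ^+ 2) &
      (forall u : nat -> A,
        (forall e : R, 0 < e -> exists N : nat, forall m n : nat,
             (N <= m)%N -> (N <= n)%N -> nrm (u m - u n) < e) ->
        exists l : A, forall e : R, 0 < e -> exists N : nat, forall n : nat,
             (N <= n)%N -> nrm (u n - l) < e)].

(* A norm on A viewed as a real vector space (a complex norm is in particular such a norm). *)
Definition is_real_norm (R : realType) (A : algType R[i]) (n : A -> R) : Prop :=
  [/\ forall a, n a = 0 -> a = 0,
      forall (r : R) a, n (rC r *: a) = `|r| * n a &
      forall a b, n (a + b) <= n a + n b].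

Definition is_metric (R : realType) (X : Type) (d : X -> X -> R) : Prop :=
  [/\ forall x y, d x y = 0 <-> x = y,
      forall x y, d x y = d y x &
      forall x y z, d x z <= d x y + d y z].

Definition d_open (R : realType) (X : Type) (d : X -> X -> R) (U : set X) : Prop :=
  forall x, U x -> exists2 e : R, 0 < e & forall y, d x y < e -> U y.

Definition d_compact (R : realType) (X : Type) (d : X -> X -> R) : Prop :=
  forall (I : Type) (U : I -> set X),
    (forall i, d_open d (U i)) -> (forall x, exists i, U i x) ->
    exists (k : nat) (f : 'I_k -> I), forall x, exists j, U (f j) x.

Definition diam (R : realType) (X : Type) (d : X -> X -> R) : R :=
  sup [set d p.1 p.2 | p in [set: X * X]].

Section CXA.
Variables (R : realType) (X : Type) (d : X -> X -> R) (A : algType R[i])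
  (star : A -> A) (nrm : A -> R).

Definition cont (a : X -> A) : Prop :=
  forall x (e : R), 0 < e -> exists2 del : R, 0 < del &
    forall y, d x y < del -> nrm (a x - a y) < e.

Definition supnorm (a : X -> A) : R := sup [set nrm (a x) | x in [set: X]].

Definition selfadj (a : X -> A) : Prop := forall x, star (a x) = a x.

Definition is_state (phi : (X -> A) -> R[i]) : Prop :=
  [/\ forall (z : R[i]) (f g : X -> A), cont f -> cont g ->
        phi (fun x => z *: f x + g x) = z * phi f + phi g,
      forall f : X -> A, cont f -> 0 <= phi (fun x => star (f x) * f x) &
      phi (fun _ => 1) = 1].

Definition lipn (n : A -> R) (a : X -> A) : \bar R :=
  ereal_sup [set ((n (a p.1 - a p.2)) / d p.1 p.2)%:E | p in [set p : X * X | p.1 <> p.2]].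

Definition L_CX (n : A -> R) (a : X -> A) : \bar R :=
  maxe (lipn n a)
    (inf [set supnorm (fun x => a x - b x) |
          b in [set b : X -> A | cont b /\ forall x, exists z : R[i], b x = z *: 1]])%:E.

Definition L_C (n : A -> R) (a : X -> A) : \bar R :=
  maxe (lipn n a)
    (inf [set supnorm (fun x => a x - lam *: 1) | lam in [set: R[i]]])%:E.

Definition L_phi (phi : (X -> A) -> R[i]) (n : A -> R) (a : X -> A) : \bar R :=
  maxe (lipn n a) (supnorm (fun x => a x - phi a *: 1))%:E.

Definition mk (L : (X -> A) -> \bar R) (mu nu : (X -> A) -> R[i]) : \bar R :=
  ereal_sup [set (cabs (mu a - nu a))%:E |
             a in [set a : X -> A | [/\ cont a, selfadj a & (L a <= 1%:E)%E]]].

End CXA.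

Definition starC (R : realType) (z : R[i]^o) : R[i]^o := (z : R[i])^*.
Definition absC (R : realType) (z : R[i]^o) : R := cabs (z : R[i]).

(* Main.v *)
Require Import Defs.
From HB Require Import structures.
From mathcomp Require Import all_boot all_order all_algebra.
From mathcomp Require Import complex.
From mathcomp Require Import all_classical all_reals.
From mathcomp Require Import ereal.
From mathcomp Require Import ring lra.
Import Order.TTheory GRing.Theory Num.Theory.
Local Open Scope ring_scope.

Set Implicit Arguments. Unset Strict Implicit. Unset Printing Implicit Defensive.

Lemma cabs_ge0 (R : realType) (z : R[i]) : 0 <= cabs z.
Proof. by case: z => a b; rewrite /cabs /= sqrtr_ge0. Qed.

Lemma cabs_rC (R : realType) (t : R) : cabs (rC t) = `|t|.
Proof. by rewrite /cabs /rC /= expr0n /= addr0 sqrtr_sqr. Qed.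

Lemma cabsN1 (R : realType) : cabs (-1 : R[i]) = 1.
Proof. by rewrite /cabs normcN Normc.normc1. Qed.

Lemma cabs0 (R : realType) : cabs (0 : R[i]) = 0.
Proof. by rewrite /cabs Normc.normc0. Qed.

Lemma rC_real (R : realType) (t : R) : (rC t)^* = rC t.
Proof. by apply: conj_Creal; rewrite /rC complex_real. Qed.

Lemma rCM (R : realType) (s t : R) : rC (s * t) = rC s * rC t.
Proof. by rewrite /rC rmorphM. Qed.
Lemma rCD (R : realType) (s t : R) : rC (s + t) = rC s + rC t.
Proof. by rewrite /rC rmorphD. Qed.
Lemma rCN (R : realType) (t : R) : rC (- t) = - rC t.
Proof. by rewrite /rC rmorphN. Qed.
Lemma rC1 (R : realType) : rC (1 : R) = 1.
Proof. by rewrite /rC rmorph1. Qed.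
Lemma rC0 (R : realType) : rC (0 : R) = 0.
Proof. by rewrite /rC rmorph0. Qed.

Section CStar.
Variables (R : realType) (A : algType R[i]) (star : A -> A) (nrm : A -> R).
Hypothesis HA : is_unital_Cstar star nrm.

Lemma nrm_eq0 a : nrm a = 0 -> a = 0.
Proof. by case: HA => [[h ? ? ?] _ _ _]; apply: h. Qed.
Lemma nrmZ z a : nrm (z *: a) = cabs z * nrm a.
Proof. by case: HA => [[? h ? ?] _ _ _]; apply: h. Qed.
Lemma nrmD a b : nrm (a + b) <= nrm a + nrm b.
Proof. by case: HA => [[? ? h ?] _ _ _]; apply: h. Qed.
Lemma nrmM a b : nrm (a * b) <= nrm a * nrm b.
Proof. by case: HA => [[? ? ? h] _ _ _]; apply: h. Qed.
Lemma starD a b : star (a + b) = star a + star b.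
Proof. by case: HA => [_ [h ? ? ?] _ _]; apply: h. Qed.
Lemma starZ z a : star (z *: a) = z^* *: star a.
Proof. by case: HA => [_ [? h ? ?] _ _]; apply: h. Qed.
Lemma starM a b : star (a * b) = star b * star a.
Proof. by case: HA => [_ [? ? h ?] _ _]; apply: h. Qed.
Lemma starK a : star (star a) = a.
Proof. by case: HA => [_ [? ? ? h] _ _]; apply: h. Qed.
Lemma cstarId a : nrm (star a * a) = nrm a ^+ 2.
Proof. by case: HA => [_ _ h _]; apply: h. Qed.
Lemma complete (u : nat -> A) :
  (forall e : R, 0 < e -> exists N : nat, forall m n : nat,
             (N <= m)%N -> (N <= n)%N -> nrm (u m - u n) < e) ->
  exists l : A, forall e : R, 0 < e -> exists N : nat, forall n : nat,
             (N <= n)%N -> nrm (u n - l) < e.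
Proof. by case: HA => [_ _ _ h]; apply: h. Qed.

Lemma nrm0 : nrm 0 = 0.
Proof. by rewrite -(scale0r (0 : A)) nrmZ cabs0 mul0r. Qed.

Lemma nrmN a : nrm (- a) = nrm a.
Proof. by rewrite -scaleN1r nrmZ cabsN1 mul1r. Qed.

Lemma nrm_ge0 a : 0 <= nrm a.
Proof.
have := nrmD a (- a); rewrite subrr nrm0 nrmN => h.
lra.
Qed.

Lemma nrmB a b : nrm (a - b) = nrm (b - a).
Proof. by rewrite -nrmN opprB. Qed.

Lemma nrmB_tri a b c : nrm (a - c) <= nrm (a - b) + nrm (b - c).
Proof. by have := nrmD (a - b) (b - c); rewrite addrA subrK. Qed.

Lemma star0 : star 0 = 0.
Proof. have := starD 0 0; rewrite addr0 => /eqP; rewrite -subr_eq0 opprD addrA subrr add0r oppr_eq0 => /eqP //. Qed.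

Lemma starN a : star (- a) = - star a.
Proof.
by rewrite -scaleN1r starZ rmorphN1 scaleN1r.
Qed.

Lemma starB a b : star (a - b) = star a - star b.
Proof. by rewrite starD starN. Qed.

Lemma star1 : star 1 = 1.
Proof.
have h1 : star (star 1 * 1) = 1 by rewrite mulr1 starK.
by rewrite starM starK mulr1 in h1.
Qed.

Lemma nrm_star_le a : nrm a <= nrm (star a).
Proof.
have h := cstarId a; have := nrmM (star a) a; rewrite h expr2 => hle.
have [->|hpos] := eqVneq (nrm a) 0; first exact: nrm_ge0.
have hp : 0 < nrm a by rewrite lt_def hpos nrm_ge0.
by rewrite -(ler_pM2r hp).
Qed.

Lemma nrm_star a : nrm (star a) = nrm a.
Proof.
apply/eqP; rewrite eq_le nrm_star_le andbT.
by have := nrm_star_le (star a); rewrite starK.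
Qed.

Lemma nrm1 : nrm 1 = 1.
Proof.
have := cstarId 1; rewrite star1 mulr1 expr2 => /eqP.
have [h0|hn] := eqVneq (nrm 1) 0.
  by move: (nrm_eq0 h0) => /eqP; rewrite oner_eq0.
by rewrite -{1}(mulr1 (nrm 1)) (inj_eq (mulfI hn)) eq_sym => /eqP.
Qed.

Definition sc (t : R) : A := rC t *: 1.

Lemma nrm_sc t : nrm (sc t) = `|t|.
Proof. by rewrite /sc nrmZ nrm1 mulr1 cabs_rC. Qed.

Lemma star_sc t : star (sc t) = sc t.
Proof. by rewrite /sc starZ rC_real star1. Qed.

Lemma scD s t : sc (s + t) = sc s + sc t.
Proof. by rewrite /sc rCD scalerDl. Qed.
Lemma scN t : sc (- t) = - sc t.
Proof. by rewrite /sc rCN scaleNr. Qed.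
Lemma scB s t : sc (s - t) = sc s - sc t.
Proof. by rewrite scD scN. Qed.

Lemma star_scale1 z : star (z *: 1) = z^* *: 1.
Proof. by rewrite starZ star1. Qed.

Lemma nrm_Re_approx (a : A) (z : R[i]) : star a = a ->
  nrm (a - sc (complex.Re z)) <= nrm (a - z *: 1).
Proof.
move=> sa.
have e : a - sc (complex.Re z) = rC (2^-1) *: ((a - z *: 1) + star (a - z *: 1)).
  rewrite starB sa star_scale1 scalerDr !scalerBr.
  rewrite /sc.
  have -> : rC (complex.Re z) = rC (2^-1) * z + rC (2^-1) * z^*.
    rewrite -mulrDr.
    case: z => x y; rewrite /rC /=.
    apply/eqP; rewrite eq_complex /= !subrr !mulr0 !mul0r !subr0 !addr0 eqxx andbT.
    by apply/eqP; field.
  set w := rC (2^-1).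
  have ww : w + w = 1.
    by rewrite /w -rCD -rC1; congr rC; field.
  rewrite !scalerA.
  rewrite -{1}(scale1r a) -ww.
  rewrite (@scalerDl _ A) (@scalerDl _ A).
  by rewrite opprD addrACA.
rewrite e nrmZ cabs_rC.
have := nrmD (a - z *: 1) (star (a - z *: 1)); rewrite nrm_star => h.
have : `|(2^-1 : R)| = 2^-1 by rewrite ger0_norm // invr_ge0.
move=> ->; lra.
Qed.

End CStar.

Section Fun.
Variables (R : realType) (X : Type) (d : X -> X -> R) (A : algType R[i])
  (star : A -> A) (nrm : A -> R).
Hypothesis HA : is_unital_Cstar star nrm.
Hypothesis Hd : is_metric d.
Hypothesis Hc : d_compact d.

Lemma d_ge0 x y : 0 <= d x y.
Proof.
case: Hd => h0 hs ht; have := ht x y x; rewrite (hs y x); have -> : d x x = 0 by apply/h0.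
lra.
Qed.

Lemma d_tri x y z : d x z <= d x y + d y z.
Proof. by case: Hd. Qed.
Lemma d_sym x y : d x y = d y x.
Proof. by case: Hd. Qed.

Lemma cont_const (c : A) : cont d nrm (fun _ => c).
Proof.
move=> x e e0; exists 1 => // y _; by rewrite subrr (nrm0 HA).
Qed.

Lemma cont_lin (z : R[i]) (f g : X -> A) : cont d nrm f -> cont d nrm g ->
  cont d nrm (fun x => z *: f x + g x).
Proof.
move=> cf cg x e e0.
set c := cabs z.
have c0 : 0 <= c by apply: cabs_ge0.
have e1 : 0 < e / (2 * (c + 1)) by apply: divr_gt0 => //; lra.
have e2 : 0 < e / 2 by lra.
have [d1 d10 h1] := cf x _ e1.
have [d2 d20 h2] := cg x _ e2.
exists (Order.min d1 d2); first by rewrite lt_min d10 d20.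
move=> y; rewrite lt_min => /andP [y1 y2].
have ha := h1 y y1; have hb := h2 y y2.
have -> : z *: f x + g x - (z *: f y + g y) = z *: (f x - f y) + (g x - g y).
  by rewrite scalerBr opprD addrACA.
apply: (le_lt_trans (nrmD HA _ _)); rewrite (nrmZ HA) -/c.
have : c * nrm (f x - f y) <= e / 2.
  apply: (@le_trans _ _ (c * (e / (2 * (c + 1))))).
    by apply: ler_wpM2l => //; apply: ltW.
  rewrite mulrA ler_pdivrMr; last by lra.
  have : c * e <= (c + 1) * e by rewrite ler_wpM2r; lra.
  move=> h; rewrite mulrA; nra.
lra.
Qed.

Lemma cont_add f g : cont d nrm f -> cont d nrm g -> cont d nrm (fun x => f x + g x).
Proof.
move=> cf cg; have := cont_lin 1 cf cg.
by have -> : (fun x => 1 *: f x + g x) = (fun x => f x + g x) by apply: funext => x; rewrite scale1r.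
Qed.

Lemma cont_scale z f : cont d nrm f -> cont d nrm (fun x => z *: f x).
Proof.
move=> cf; have := cont_lin z cf (cont_const 0).
by have -> : (fun x => z *: f x + 0) = (fun x => z *: f x) by apply: funext => x; rewrite addr0.
Qed.

Lemma cont_opp f : cont d nrm f -> cont d nrm (fun x => - f x).
Proof.
move=> cf; have := cont_scale (-1) cf.
by have -> : (fun x => (-1) *: f x) = (fun x => - f x) by apply: funext => x; rewrite scaleN1r.
Qed.

Lemma cont_sub f g : cont d nrm f -> cont d nrm g -> cont d nrm (fun x => f x - g x).
Proof. by move=> cf cg; apply: cont_add => //; apply: cont_opp. Qed.

Lemma cont_bounded f : cont d nrm f -> exists K : R, forall x, nrm (f x) <= K.
Proof.
move=> cf.
pose U := fun n : nat => (fun x => (nrm (f x) < n%:R)%R : Prop).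
have hop : forall n, d_open d (U n).
  move=> n x /= hx.
  have hx' : 0 < n%:R - nrm (f x) by rewrite subr_gt0.
  have [del del0 hdel] := cf x _ hx'.
  exists del => // y /hdel h; rewrite /U.
  have := nrmD HA (f x) (- (f x - f y)); rewrite (nrmN HA) opprB addrC subrK.
  move=> h2; lra.
have hcov : forall x, exists n, U n x.
  move=> x; exists (Num.Def.archi_bound (nrm (f x))).
  by rewrite /U; apply: archi_boundP; apply: (nrm_ge0 HA).
have [k [g hg]] := Hc hop hcov.
exists ((\max_(j < k) g j)%N)%:R => x.
have [j hj] := hg x; apply: ltW; apply: (lt_le_trans hj).
by rewrite ler_nat (bigD1 j) //= leq_maxl.
Qed.

Lemma dist_bounded x0 : exists D : R, forall y, d x0 y <= D.
Proof.
pose U := fun n : nat => (fun y => (d x0 y < n%:R)%R : Prop).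
have hop : forall n, d_open d (U n).
  move=> n x /= hx.
  exists (n%:R - d x0 x); first by rewrite subr_gt0.
  move=> y h; rewrite /U; have := d_tri x0 x y; lra.
have hcov : forall x, exists n, U n x.
  move=> x; exists (Num.Def.archi_bound (d x0 x)).
  by rewrite /U; apply: archi_boundP; apply: d_ge0.
have [k [g hg]] := Hc hop hcov.
exists ((\max_(j < k) g j)%N)%:R => x.
have [j hj] := hg x; apply: ltW; apply: (lt_le_trans hj).
by rewrite ler_nat (bigD1 j) //= leq_maxl.
Qed.

Lemma le_diam x y : d x y <= diam d.
Proof.
have [D hD] := dist_bounded x.
apply: sup_upper_bound; last by exists (x, y).
split; first by exists (d x y), (x, y).
exists (D + D) => _ [[p q] _ <-] /=.
have := d_tri p x q; rewrite (d_sym p x) => h.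
have := hD p; have := hD q; lra.
Qed.

End Fun.

Section State.
Variables (R : realType) (X : Type) (d : X -> X -> R) (A : algType R[i])
  (star : A -> A) (nrm : A -> R).
Hypothesis HA : is_unital_Cstar star nrm.
Variable phi : (X -> A) -> R[i].
Hypothesis Hphi : is_state d star nrm phi.

Lemma st_lin z f g : cont d nrm f -> cont d nrm g ->
  phi (fun x => z *: f x + g x) = z * phi f + phi g.
Proof. by case: Hphi => h _ _; apply: h. Qed.
Lemma st_pos f : cont d nrm f -> 0 <= phi (fun x => star (f x) * f x).
Proof. by case: Hphi => _ h _; apply: h. Qed.
Lemma st_one : phi (fun _ => 1) = 1.
Proof. by case: Hphi. Qed.

Lemma st0 : phi (fun _ => 0) = 0.
Proof.
have := st_lin 1 (cont_const d HA 0) (cont_const d HA 0).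
have -> : (fun _ : X => 1 *: (0 : A) + 0) = (fun _ => 0) by apply: funext => x; rewrite scaler0 addr0.
rewrite mul1r => /eqP; rewrite -subr_eq0 opprD addrA subrr add0r oppr_eq0 => /eqP //.
Qed.

Lemma stZ z f : cont d nrm f -> phi (fun x => z *: f x) = z * phi f.
Proof.
move=> cf; have := st_lin z cf (cont_const d HA 0).
have -> : (fun x => z *: f x + 0) = (fun x => z *: f x) by apply: funext => x; rewrite addr0.
by rewrite st0 addr0.
Qed.

Lemma stD f g : cont d nrm f -> cont d nrm g -> phi (fun x => f x + g x) = phi f + phi g.
Proof.
move=> cf cg; have := st_lin 1 cf cg.
have -> : (fun x => 1 *: f x + g x) = (fun x => f x + g x) by apply: funext => x; rewrite scale1r.
by rewrite mul1r.
Qed.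

Lemma stN f : cont d nrm f -> phi (fun x => - f x) = - phi f.
Proof.
move=> cf; have := stZ (-1) cf.
have -> : (fun x => (-1) *: f x) = (fun x => - f x) by apply: funext => x; rewrite scaleN1r.
by rewrite mulN1r.
Qed.

Lemma st_const_scale z : phi (fun _ => z *: 1) = z.
Proof. by rewrite (stZ z (cont_const d HA 1)) st_one mulr1. Qed.

End State.

Lemma bernoulli_ineq (R : realType) (t : R) n : 0 <= t -> 1 + n%:R * t <= (1 + t) ^+ n.
Proof.
move=> t0; elim: n => [|n IH]; first by rewrite mul0r addr0 expr0.
rewrite exprS -addn1 natrD.
have h1 : 0 <= 1 + t by lra.
have h2 : 0 <= n%:R * t by apply: mulr_ge0.
have := ler_wpM2l h1 IH; nra.
Qed.

Lemma pow_small (R : realType) (rho e : R) : 0 < rho -> rho < 1 -> 0 < e ->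
  exists N : nat, rho ^+ N < e.
Proof.
move=> r0 r1 e0.
set t := rho^-1 - 1.
have t0 : 0 < t by rewrite /t subr_gt0 invf_gt1.
have rt : rho * (1 + t) = 1 by rewrite /t addrC subrK mulfV // gt_eqF.
exists (Num.Def.archi_bound ((e * t)^-1)).
set N := Num.Def.archi_bound _.
have hN : (e * t)^-1 < N%:R by apply: archi_boundP; rewrite invr_ge0 mulr_ge0 // ltW.
have hb := bernoulli_ineq N (ltW t0).
have hp : rho ^+ N * (1 + t) ^+ N = 1 by rewrite -exprMn rt expr1n.
have rN : 0 < rho ^+ N by apply: exprn_gt0.
have h3 : rho ^+ N * (1 + N%:R * t) <= 1.
  by rewrite -[X in _ <= X]hp; apply: ler_wpM2l => //; apply: ltW.
have et : 0 < e * t by apply: mulr_gt0.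
have h4 : 1 < N%:R * (e * t) by rewrite -ltr_pdivrMr // div1r.
nra.
Qed.

Definition rhoOf (R : realType) (r : R) := (1 + r) / 2.
Lemma rhoOf_gt0 (R : realType) (r : R) : 0 <= r -> 0 < rhoOf r.
Proof. by move=> h; rewrite /rhoOf divr_gt0 //; lra. Qed.
Lemma rhoOf_lt1 (R : realType) (r : R) : r < 1 -> rhoOf r < 1.
Proof. by move=> h; rewrite /rhoOf ltr_pdivrMr //; lra. Qed.
Lemma rhoOf_key (R : realType) (r : R) : 0 <= r -> r < 1 -> r + rhoOf r * rhoOf r <= 2 * rhoOf r.
Proof. move=> h1 h2; rewrite /rhoOf; nra. Qed.

Section Sqrt.
Variables (R : realType) (X : Type) (d : X -> X -> R) (A : algType R[i])
  (star : A -> A) (nrm : A -> R).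
Hypothesis HA : is_unital_Cstar star nrm.
Variables (z : X -> A) (r : R).
Hypothesis r0 : 0 <= r.
Hypothesis r1 : r < 1.
Hypothesis cz : cont d nrm z.
Hypothesis sz : forall x, star (z x) = z x.
Hypothesis bz : forall x, nrm (z x) <= r.

Local Notation rho := (rhoOf r).
Local Notation h := (rC (2^-1) : R[i]).

Let rho0 : 0 < rho. Proof. exact: rhoOf_gt0. Qed.
Let rho1 : rho < 1. Proof. exact: rhoOf_lt1. Qed.
Let rhok : r + rho * rho <= 2 * rho. Proof. exact: rhoOf_key. Qed.

Let nrm_h u : nrm (h *: u) = 2^-1 * nrm u.
Proof. by rewrite (nrmZ HA) cabs_rC ger0_norm // invr_ge0. Qed.

Fixpoint W (k : nat) (x : X) : A :=
  match k with 0 => 0 | k'.+1 => h *: (z x + W k' x * W k' x) end.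

Lemma sq_diff (a b : A) : nrm (a * a - b * b) <= (nrm a + nrm b) * nrm (a - b).
Proof.
have -> : a * a - b * b = a * (a - b) + (a - b) * b.
  by rewrite mulrBr mulrBl addrA subrK.
apply: (le_trans (nrmD HA _ _)).
have := nrmM HA a (a - b); have := nrmM HA (a - b) b.
rewrite mulrDl (mulrC (nrm (a - b)) (nrm b)); lra.
Qed.

Lemma W_bound k x : nrm (W k x) <= rho.
Proof.
elim: k => [|k IH] /=; first by rewrite (nrm0 HA) ltW.
rewrite nrm_h.
have := nrmD HA (z x) (W k x * W k x); have := nrmM HA (W k x) (W k x).
have := bz x; have := nrm_ge0 HA (W k x).
have := rhok; nra.
Qed.

Lemma W_step k x : nrm (W k.+2 x - W k.+1 x) <= rho * nrm (W k.+1 x - W k x).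
Proof.
rewrite [W k.+2 x]/= [W k.+1 x in X in _ - X]/=.
rewrite -scalerBr nrm_h opprD addrACA subrr add0r.
have := sq_diff (W k.+1 x) (W k x).
have := W_bound k.+1 x; have := W_bound k x.
have := nrm_ge0 HA (W k.+1 x - W k x).
nra.
Qed.

Lemma W_geo k x : nrm (W k.+1 x - W k x) <= rho ^+ k.
Proof.
elim: k => [|k IH].
  rewrite /= expr0 subr0 mulr0 addr0 nrm_h; have := bz x; have := r1; lra.
apply: (le_trans (W_step k x)); rewrite exprS; apply: ler_wpM2l => //; exact: ltW.
Qed.

Lemma W_tail n j x : nrm (W (n + j) x - W n x) <= rho ^+ n * (1 - rho ^+ j) / (1 - rho).
Proof.
have hr : 0 < 1 - rho by have := rho1; lra.
elim: j => [|j IH]; first by rewrite addn0 subrr (nrm0 HA) expr0 subrr mulr0 mul0r.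
rewrite addnS.
apply: (le_trans (nrmB_tri HA _ (W (n + j) x) _)).
have := W_geo (n + j) x; rewrite exprD => hg.
rewrite ler_pdivlMr //.
have e : rho ^+ n * (1 - rho ^+ j) / (1 - rho) * (1 - rho) = rho ^+ n * (1 - rho ^+ j).
  by rewrite -mulrA mulVf ?mulr1 // gt_eqF.
move: IH; rewrite -(ler_pM2r hr) e => IH.
rewrite exprS.
have := exprn_gt0 n rho0; have := exprn_gt0 j rho0.
nra.
Qed.

Lemma W_cb n m x : (n <= m)%N -> nrm (W m x - W n x) <= rho ^+ n / (1 - rho).
Proof.
move=> /subnKC <-.
apply: (le_trans (W_tail n (m - n) x)).
have hr : 0 < 1 - rho by have := rho1; lra.
rewrite ler_pM2r ?invr_gt0 //.
have := exprn_gt0 n rho0; have := exprn_gt0 (m - n) rho0; nra.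
Qed.

Lemma W_cauchy x : forall e : R, 0 < e -> exists N : nat, forall m n : nat,
  (N <= m)%N -> (N <= n)%N -> nrm (W m x - W n x) < e.
Proof.
move=> e e0.
have hr : 0 < 1 - rho by have := rho1; lra.
have [N hN] := pow_small rho0 rho1 (mulr_gt0 e0 hr).
exists N => m n hm hn.
have key : forall p q, (N <= p)%N -> (p <= q)%N -> nrm (W q x - W p x) < e.
  move=> p q hp hpq; apply: (le_lt_trans (W_cb x hpq)).
  rewrite ltr_pdivrMr //; apply: le_lt_trans hN.
  by apply: ler_wiXn2l => //; apply: ltW.
have [hmn|hnm] := leqP m n.
  by rewrite (nrmB HA); apply: key.
by apply: key => //; apply: ltnW.
Qed.

Lemma W_lim : exists w : X -> A, forall x, forall e : R, 0 < e ->
  exists N : nat, forall n : nat, (N <= n)%N -> nrm (W n x - w x) < e.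
Proof.
have := fun x => complete HA (W_cauchy x).
move=> /choice [w hw]; by exists w.
Qed.

Lemma small0 (u : A) : (forall e : R, 0 < e -> nrm u <= e) -> u = 0.
Proof.
move=> hu; apply: (nrm_eq0 HA).
apply/eqP; rewrite eq_le (nrm_ge0 HA) andbT.
by apply/ler_addgt0Pr => e e0; rewrite add0r; apply: hu.
Qed.

Lemma W_sa k x : star (W k x) = W k x.
Proof.
elim: k => [|k IH] /=; first exact: (star0 HA).
by rewrite (starZ HA) rC_real (starD HA) (starM HA) IH sz.
Qed.

Local Notation K := ((1 - rhoOf r)^-1).

Lemma W_lip k x y : nrm (W k x - W k y) <= K * nrm (z x - z y).
Proof.
have hK : 0 < K by rewrite invr_gt0; have := rho1; lra.
have hK1 : (1 - rho) * K = 1 by rewrite mulfV // gt_eqF // subr_gt0.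
elim: k => [|k IH] /=.
  by rewrite subrr (nrm0 HA) mulr_ge0 ?(nrm_ge0 HA) // ltW.
rewrite -scalerBr nrm_h opprD addrACA.
apply: (@le_trans _ _ (2^-1 * (nrm (z x - z y) + nrm (W k x * W k x - W k y * W k y)))).
  by rewrite ler_pM2l ?invr_gt0 // (nrmD HA).
have := sq_diff (W k x) (W k y).
have := W_bound k x; have := W_bound k y; have := nrm_ge0 HA (W k x - W k y).
have := nrm_ge0 HA (z x - z y).
have := rho0; have := rho1; nra.
Qed.

Lemma nrm_le_sub (a b : A) : nrm a <= nrm b + nrm (b - a).
Proof.
by have := nrmD HA b (- (b - a)); rewrite (nrmN HA) opprB addrC subrK.
Qed.

Lemma sqrt_exists : exists y : X -> A, cont d nrm y /\ forall x, star (y x) * y x = 1 - z x.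
Proof.
have [w hw] := W_lim.
have hK : 0 < K by rewrite invr_gt0; have := rho1; lra.
have wb : forall x, nrm (w x) <= rho + 1.
  move=> x; have [N hN] := hw x 1 ltr01; have := hN N (leqnn N).
  have := W_bound N x; have := nrm_le_sub (w x) (W N x); lra.
have wfix : forall x, w x = h *: (z x + w x * w x).
  move=> x; apply/eqP; rewrite -subr_eq0; apply/eqP; apply: small0 => e e0.
  have e3 : 0 < e / 3 by apply: divr_gt0.
  have [N hN] := hw x _ e3.
  have h1 := hN N.+1 (leqnSn N); have h2 := hN N (leqnn N).
  apply: (le_trans (nrmB_tri HA _ (W N.+1 x) _)).
  rewrite (nrmB HA (w x)) [W N.+1 x]/= -scalerBr opprD addrACA subrr add0r nrm_h.
  have := sq_diff (W N x) (w x).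
  have := W_bound N x; have := wb x; have := nrm_ge0 HA (W N x - w x).
  have := nrm_ge0 HA (W N x); have := nrm_ge0 HA (w x); have := rho1.
  have : e / 3 * 3 = e by rewrite divfK.
  nra.
have wsa : forall x, star (w x) = w x.
  move=> x; apply/eqP; rewrite -subr_eq0; apply/eqP; apply: small0 => e e0.
  have e2 : 0 < e / 2 by apply: divr_gt0.
  have [N hN] := hw x _ e2.
  have h2 := hN N (leqnn N).
  apply: (le_trans (nrmB_tri HA _ (W N x) _)).
  rewrite -{1}(W_sa N x) -(starB HA) (nrm_star HA) (nrmB HA (w x)).
  have : e / 2 * 2 = e by rewrite divfK.
  lra.
have wlip : forall x y, nrm (w x - w y) <= K * nrm (z x - z y).
  move=> x y; apply/ler_addgt0Pr => e e0.
  have e2 : 0 < e / 2 by apply: divr_gt0.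
  have [N1 hN1] := hw x _ e2; have [N2 hN2] := hw y _ e2.
  have h1 := hN1 (maxn N1 N2) (leq_maxl _ _).
  have h2 := hN2 (maxn N1 N2) (leq_maxr _ _).
  set N := maxn N1 N2 in h1 h2.
  have := W_lip N x y.
  have := nrmB_tri HA (w x) (W N x) (w y); have := nrmB_tri HA (W N x) (W N y) (w y).
  rewrite (nrmB HA (w x) (W N x)).
  have : e / 2 * 2 = e by rewrite divfK.
  lra.
have cw : cont d nrm w.
  move=> x e e0.
  have [del del0 hd] := cz x (divr_gt0 e0 hK).
  exists del => // y hy.
  apply: (le_lt_trans (wlip x y)).
  have : K * nrm (z x - z y) < K * (e / K) by rewrite ltr_pM2l //; apply: hd.
  by rewrite mulrCA mulfV ?mulr1 // gt_eqF.
exists (fun x => 1 - w x); split.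
  exact: (cont_sub HA (cont_const d HA 1) cw).
move=> x.
have ww2 : w x + w x = z x + w x * w x.
  rewrite {1 2}(wfix x) -scalerDl -rCD -[X in _ = X]scale1r; congr (_ *: _).
  by rewrite -rC1; congr rC; field.
rewrite (starB HA) (star1 HA) wsa mulrBl mul1r mulrBr mulr1.
have hz : z x = w x + w x - w x * w x by rewrite ww2 addrK.
rewrite hz opprB [in RHS]opprB opprD -addrA; congr (_ + _).
by rewrite addrCA.
Qed.

End Sqrt.

Lemma state_nonempty (R : realType) (X : Type) (d : X -> X -> R) (A : algType R[i])
  (star : A -> A) (nrm : A -> R) (HA : is_unital_Cstar star nrm)
  (mu : (X -> A) -> R[i]) : is_state d star nrm mu -> exists x : X, True.
Proof.
move=> Hmu; case: (pselect (exists x : X, True)) => // hn.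
have e : (fun _ : X => (1 : A)) = (fun _ => 0).
  by apply: funext => x; exfalso; apply: hn; exists x.
have := st_one Hmu; rewrite e (st0 HA Hmu) => /eqP; rewrite eq_sym oner_eq0.
by [].
Qed.

Section G.
Variables (R : realType) (X : Type) (d : X -> X -> R) (A : algType R[i])
  (star : A -> A) (nrm : A -> R).
Hypothesis HA : is_unital_Cstar star nrm.
Variable mu : (X -> A) -> R[i].
Hypothesis Hmu : is_state d star nrm mu.

Lemma stateG (a : X -> A) (T0 C : R) : cont d nrm a -> (forall x, star (a x) = a x) ->
  (forall x, nrm (sc A T0 + a x) <= T0 + C) ->
  complex.Im (mu a) = 0 /\ complex.Re (mu a) <= C.
Proof.
move=> ca sa hb.
have [x0 _] := state_nonempty HA Hmu.
have hTC : 0 <= T0 + C by apply: le_trans (hb x0); apply: (nrm_ge0 HA).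
have key : forall C', C < C' -> complex.Im (mu a) = 0 /\ complex.Re (mu a) <= C'.
  move=> C' hC.
  set T := T0 + C'.
  have hT : 0 < T by rewrite /T; lra.
  set al : R[i] := rC (T^-1).
  pose z := fun x => al *: (sc A T0 + a x).
  set r := (T0 + C) / T.
  have r0 : 0 <= r by rewrite /r divr_ge0 // ltW.
  have r1 : r < 1 by rewrite /r ltr_pdivrMr // mul1r /T; lra.
  have cz : cont d nrm z.
    exact: (cont_scale HA _ (cont_add HA (cont_const d HA _) ca)).
  have sz : forall x, star (z x) = z x.
    by move=> x; rewrite /z (starZ HA) rC_real (starD HA) (star_sc HA) sa.
  have bz : forall x, nrm (z x) <= r.
    move=> x; rewrite /z (nrmZ HA) cabs_rC ger0_norm; last by rewrite invr_ge0 ltW.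
    by rewrite /r mulrC ler_pM2r ?invr_gt0.
  have [y [cy hy]] := sqrt_exists HA r0 r1 cz sz bz.
  have hp := st_pos Hmu cy.
  set c : R[i] := 1 - al * rC T0.
  have e1 : (fun x => star (y x) * y x) = (fun x => (- al) *: a x + c *: 1).
    apply: funext => x; rewrite hy /z /c /sc scalerDr scalerA scalerBl scale1r scaleNr.
    by rewrite opprD addrA addrC.
  rewrite e1 (st_lin Hmu _ ca (cont_const d HA _)) (st_const_scale HA Hmu) in hp.
  have hT' : 0 <= rC T by rewrite /rC ler0c ltW.
  have := mulr_ge0 hT' hp.
  have hTa : rC T * al = 1 by rewrite /al -rCM mulfV ?rC1 // gt_eqF.
  have -> : rC T * (- al * mu a + c) = - (rC T * al) * mu a + rC T - (rC T * al) * rC T0.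
    by rewrite /c; ring.
  rewrite hTa mulN1r mul1r /T rCD.
  have -> : - mu a + (rC T0 + rC C') - rC T0 = rC C' - mu a by ring.
  rewrite subr_ge0 lecE /= => /andP [/eqP h1 h2].
  by split.
split; first by have := key (C + 1); case => //; lra.
apply/ler_addgt0Pr => e e0; have := key (C + e); case => //; lra.
Qed.

End G.

Lemma ReN (R : realType) (z : R[i]) : complex.Re (- z) = - complex.Re z.
Proof. by case: z. Qed.
Lemma ReB (R : realType) (z w : R[i]) : complex.Re (z - w) = complex.Re z - complex.Re w.
Proof. by case: z; case: w. Qed.
Lemma ImB (R : realType) (z w : R[i]) : complex.Im (z - w) = complex.Im z - complex.Im w.
Proof. by case: z; case: w. Qed.

Lemma cabs_real (R : realType) (w : R[i]) : complex.Im w = 0 -> cabs w = `|complex.Re w|.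
Proof. by case: w => x y /= ->; rewrite -cabs_rC. Qed.

Section Final.
Variables (R : realType) (X : Type) (d : X -> X -> R) (A : algType R[i])
  (star : A -> A) (nrm : A -> R).
Hypothesis HA : is_unital_Cstar star nrm.
Hypothesis Hc : d_compact d.

Lemma state_lower (mu : (X -> A) -> R[i]) (Hmu : is_state d star nrm mu)
  (a : X -> A) (T0 C : R) : cont d nrm a -> (forall x, star (a x) = a x) ->
  (forall x, nrm (sc A T0 - a x) <= T0 - C) ->
  complex.Im (mu a) = 0 /\ C <= complex.Re (mu a).
Proof.
move=> ca sa hb.
have [] := stateG HA Hmu (T0 := T0) (C := - C) (cont_opp HA ca) _ _.
- by move=> x; rewrite (starN HA) sa.
- exact: hb.
rewrite (stN HA Hmu ca) ReN => h1 h2; split; last by lra.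
by move: h1; case: (mu a) => p q /= /eqP; rewrite oppr_eq0 => /eqP.
Qed.

Lemma two_sided (mu nu : (X -> A) -> R[i]) (Hmu : is_state d star nrm mu)
  (Hnu : is_state d star nrm nu) (a : X -> A) (T0 U B : R) :
  cont d nrm a -> (forall x, star (a x) = a x) ->
  (forall x, nrm (sc A T0 + a x) <= T0 + U) ->
  (forall x, nrm (sc A T0 - a x) <= T0 - (U - B)) ->
  cabs (mu a - nu a) <= B.
Proof.
move=> ca sa h1 h2.
have [i1 u1] := stateG HA Hmu ca sa h1.
have [i2 u2] := stateG HA Hnu ca sa h1.
have [_ l1] := state_lower Hmu ca sa h2.
have [_ l2] := state_lower Hnu ca sa h2.
rewrite cabs_real; last by rewrite ImB i1 i2 subrr.
rewrite ReB ler_norml; apply/andP; split; lra.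
Qed.

Lemma near_bounds (b : A) (l s T0 : R) : nrm (b - sc A l) <= s -> `|l| <= T0 ->
  nrm (sc A T0 + b) <= T0 + (l + s) /\ nrm (sc A T0 - b) <= T0 - (l - s).
Proof.
move=> hb hl; split.
  have -> : sc A T0 + b = sc A (T0 + l) + (b - sc A l) by rewrite scD addrACA subrr addr0.
  apply: (le_trans (nrmD HA _ _)); rewrite (nrm_sc HA).
  have := ler_norml l T0; rewrite hl => /esym /andP [h3 _].
  rewrite ger0_norm; lra.
have -> : sc A T0 - b = sc A (T0 - l) + (sc A l - b) by rewrite scB addrA subrK.
apply: (le_trans (nrmD HA _ _)); rewrite (nrm_sc HA) (nrmB HA (sc A l)).
have := ler_norml l T0; rewrite hl => /esym /andP [_ h3].
rewrite ger0_norm; lra.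
Qed.

Lemma sup_bound (f : X -> A) x : cont d nrm f -> nrm (f x) <= supnorm nrm f.
Proof.
move=> cf; have [K hK] := cont_bounded HA Hc cf.
apply: sup_upper_bound; last by exists x.
split; first by exists (nrm (f x)), x.
by exists K => _ [y _ <-]; apply: hK.
Qed.

Lemma main_bound (mu nu : (X -> A) -> R[i]) (Hmu : is_state d star nrm mu)
  (Hnu : is_state d star nrm nu) (a : X -> A) (s L : R) :
  cont d nrm a -> (forall x, star (a x) = a x) -> 0 <= s ->
  (forall y, exists l : R, nrm (a y - sc A l) <= s) ->
  (forall x y, nrm (a x - a y) <= L) ->
  cabs (mu a - nu a) <= 2 * s + L.
Proof.
move=> ca sa s0 hl hL.
have [K hK] := cont_bounded HA Hc ca.
have [x0 _] := state_nonempty HA Hmu.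
have K0 : 0 <= K by apply: le_trans (hK x0); apply: (nrm_ge0 HA).
set T0 := K + s.
have hT0 : forall y l, nrm (a y - sc A l) <= s -> `|l| <= T0.
  move=> y l h; rewrite -(nrm_sc HA) /T0.
  have := nrm_le_sub HA (sc A l) (a y); have := hK y; lra.
pose E := [set nrm (sc A T0 + a x) - T0 | x in [set: X]]%classic.
have up : forall x, nrm (sc A T0 + a x) - T0 <= K.
  move=> x; have := nrmD HA (sc A T0) (a x); rewrite (nrm_sc HA) ger0_norm /T0; last by lra.
  have := hK x; lra.
have hE : has_sup E.
  split; first by exists (nrm (sc A T0 + a x0) - T0), x0.
  by exists K => _ [x _ <-]; apply: up.
apply: (@two_sided mu nu Hmu Hnu a T0 (sup E)) => //.
  move=> x; have : nrm (sc A T0 + a x) - T0 <= sup E.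
    by apply: sup_upper_bound => //; exists x.
  lra.
move=> y; have [l hly] := hl y.
have [hb1 hb2] := near_bounds hly (hT0 y l hly).
have : sup E <= l + s + L.
  apply: ge_sup; first by exists (nrm (sc A T0 + a x0) - T0), x0.
  move=> _ [x _ <-].
  have -> : sc A T0 + a x = (sc A T0 + a y) + (a x - a y) by rewrite addrACA subrr addr0.
  have := nrmD HA (sc A T0 + a y) (a x - a y); have := hL x y; lra.
lra.
Qed.

End Final.

Lemma real_complete (R : realType) (u : nat -> R) :
  (forall e : R, 0 < e -> exists N : nat, forall m n : nat,
     (N <= m)%N -> (N <= n)%N -> `|u m - u n| < e) ->
  exists l : R, forall e : R, 0 < e -> exists N : nat, forall n : nat,
     (N <= n)%N -> `|u n - l| < e.
Proof.
move=> hc.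
have [N1 h1] := hc 1 ltr01.
pose E := [set x : R | exists N : nat, forall n, (N <= n)%N -> x <= u n]%classic.
have hne : (E !=set0)%classic.
  exists (u N1 - 1), N1 => n hn; have := h1 n N1 hn (leqnn _).
  by rewrite ltr_norml => /andP [h _]; lra.
have hE : has_sup E.
  split => //; exists (u N1 + 1) => x [N hN].
  have := hN (maxn N N1) (leq_maxl _ _); have := h1 (maxn N N1) N1 (leq_maxr _ _) (leqnn _).
  by rewrite ltr_norml => /andP [_ h]; lra.
exists (sup E) => e e0.
have e2 : 0 < e / 2 by apply: divr_gt0.
have [N hN] := hc _ e2.
have he : e / 2 * 2 = e by rewrite divfK.
have lo : u N - e / 2 <= sup E.
  apply: sup_upper_bound => //; exists N => n hn; have := hN n N hn (leqnn _).
  by rewrite ltr_norml => /andP [h _]; lra.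
have hi : sup E <= u N + e / 2.
  apply: ge_sup => // x [N' hN'].
  have := hN' (maxn N N') (leq_maxr _ _); have := hN (maxn N N') N (leq_maxl _ _) (leqnn _).
  by rewrite ltr_norml => /andP [_ h]; lra.
exists N => n hn; have := hN n N hn (leqnn _).
rewrite !ltr_norml => /andP [h3 h4]; apply/andP; split; lra.
Qed.

Lemma normc_Re (R : realType) (w : R[i]) : `|complex.Re w| <= cabs w.
Proof.
case: w => x y; rewrite /cabs /= -sqrtr_sqr; apply: ler_wsqrtr.
by rewrite lerDl sqr_ge0.
Qed.

Lemma normc_Im (R : realType) (w : R[i]) : `|complex.Im w| <= cabs w.
Proof.
case: w => x y; rewrite /cabs /= -sqrtr_sqr; apply: ler_wsqrtr.
by rewrite lerDr sqr_ge0.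
Qed.

Lemma cabs_le_ReIm (R : realType) (w : R[i]) :
  cabs w <= `|complex.Re w| + `|complex.Im w|.
Proof.
case: w => x y.
have -> : complex.Re (x +i* y)%C = x by [].
have -> : complex.Im (x +i* y)%C = y by [].
have e : (x +i* y)%C = (x +i* 0)%C + (0 +i* y)%C by apply/eqP; rewrite eq_complex /= addr0 add0r !eqxx.
rewrite [X in cabs X]e.
apply: (le_trans (le_normcD _ _)).
have -> : Normc.normc (x +i* 0)%C = `|x| by rewrite /= expr0n /= addr0 sqrtr_sqr.
have -> : Normc.normc (0 +i* y)%C = `|y| by rewrite /= expr0n /= add0r sqrtr_sqr.
by [].
Qed.

Lemma C_Cstar (R : realType) : is_unital_Cstar (@starC R) (@absC R).
Proof.
split.
- split.
  + by move=> a; rewrite /absC /cabs => /Normc.eq0_normc.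
  + by move=> z a; rewrite /absC /cabs /= Normc.normcM.
  + by move=> a b; rewrite /absC /cabs; apply: le_normcD.
  + by move=> a b; rewrite /absC /cabs /= Normc.normcM.
- split.
  + by move=> a b; rewrite /starC rmorphD.
  + by move=> z a; rewrite /starC /= rmorphM.
  + by move=> a b; rewrite /starC /= rmorphM mulrC.
  + by move=> a; rewrite /starC conjCK.
- move=> a; rewrite /absC /cabs /starC /= Normc.normcM expr2; congr (_ * _).
  by case: a => x y /=; rewrite sqrrN.
- move=> u hu.
  have hr : forall e : R, 0 < e -> exists N : nat, forall m n : nat,
     (N <= m)%N -> (N <= n)%N -> `|complex.Re (u m) - complex.Re (u n)| < e.
    move=> e e0; have [N hN] := hu e e0; exists N => m n hm hn.
    rewrite -ReB; apply: le_lt_trans (normc_Re _) _; exact: hN.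
  have hi : forall e : R, 0 < e -> exists N : nat, forall m n : nat,
     (N <= m)%N -> (N <= n)%N -> `|complex.Im (u m) - complex.Im (u n)| < e.
    move=> e e0; have [N hN] := hu e e0; exists N => m n hm hn.
    rewrite -ImB; apply: le_lt_trans (normc_Im _) _; exact: hN.
  have [lr hlr] := real_complete hr.
  have [li hli] := real_complete hi.
  exists ((lr +i* li)%C : R[i]) => e e0.
  have e2 : 0 < e / 2 by apply: divr_gt0.
  have [N1 h1] := hlr _ e2; have [N2 h2] := hli _ e2.
  exists (maxn N1 N2) => n hn.
  have := h1 n (leq_trans (leq_maxl _ _) hn); have := h2 n (leq_trans (leq_maxr _ _) hn).
  have := cabs_le_ReIm (u n - (lr +i* li)%C); rewrite ReB ImB /=.
  have : e / 2 * 2 = e by rewrite divfK.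
  rewrite /absC; lra.
Qed.

Lemma mk_le (R : realType) (X : Type) (d : X -> X -> R) (A : algType R[i])
  (star : A -> A) (nrm : A -> R) (L : (X -> A) -> \bar R) mu nu (B : R) :
  (forall a, cont d nrm a -> selfadj star a -> (L a <= 1%:E)%E -> cabs (mu a - nu a) <= B) ->
  (mk d star nrm L mu nu <= B%:E)%E.
Proof.
move=> h; apply: ge_ereal_sup => _ [a [ca sa hL] <-]; rewrite lee_fin; exact: h.
Qed.

Lemma lip_bound (R : realType) (X : Type) (d : X -> X -> R) (A : algType R[i])
  (star : A -> A) (nrm : A -> R) (HA : is_unital_Cstar star nrm) (Hd : is_metric d)
  (Hc : d_compact d) (n : A -> R) (N : R) (a : X -> A) :
  0 < N -> (forall a, nrm a <= N * n a) -> (lipn d n a <= 1%:E)%E ->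
  forall x y, nrm (a x - a y) <= N * diam d.
Proof.
move=> N0 hN hl x y.
have dd := le_diam Hd Hc x y.
have dg := d_ge0 Hd x y.
case: (pselect (x = y)) => [<-|hxy].
  rewrite subrr (nrm0 HA); apply: mulr_ge0; [exact: ltW | exact: le_trans dg dd].
have dpos : 0 < d x y.
  rewrite lt_def dg andbT; apply/eqP => h0; apply: hxy.
  by case: Hd => h _ _; apply/h.
have : (((n (a x - a y)) / d x y)%:E <= lipn d n a)%E.
  by apply: ereal_sup_ubound; exists (x, y).
move=> /le_trans /(_ hl); rewrite lee_fin ler_pdivrMr // mul1r => hn.
apply: (le_trans (hN _)); rewrite ler_pM2l //; exact: le_trans hn dd.
Qed.

Unset Implicit Arguments.

Theorem proposition2p10 (R : realType) (X : Type) (d : X -> X -> R) :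
  is_metric d -> d_compact d ->
  (* parts (1)(a) and (2): a general unital C*-algebra A *)
  (forall (A : algType R[i]) (star : A -> A) (nrm : A -> R),
    is_unital_Cstar star nrm ->
    forall (phi : (X -> A) -> R[i]), is_state d star nrm phi ->
    forall (n : A -> R) (M N : R), is_real_norm n -> 0 < M -> 0 < N ->
      (forall a, M * n a <= nrm a) -> (forall a, nrm a <= N * n a) ->
      [/\ (* (1)(a) q = C(X) *)
          (forall mu nu, is_state d star nrm mu -> is_state d star nrm nu ->
             (mk d star nrm (L_CX d nrm n) mu nu <= (2 + N * diam d)%:E)%E),
          (* (2) q = C *)
          (forall mu nu, is_state d star nrm mu -> is_state d star nrm nu ->
             (mk d star nrm (L_C d nrm n) mu nu <= 2%:E)%E) &
          (* (2) q = phi *)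
          (forall mu nu, is_state d star nrm mu -> is_state d star nrm nu ->
             (mk d star nrm (L_phi d nrm phi n) mu nu <= 2%:E)%E)])
  /\
  (* part (1)(b): A = C (with conjugation and modulus) *)
  (forall (phi : (X -> R[i]^o) -> R[i]),
    is_state d (@starC R) (@absC R) phi ->
    forall (n : R[i]^o -> R) (M N : R), is_real_norm n -> 0 < M -> 0 < N ->
      (forall a, M * n a <= absC a) -> (forall a, absC a <= N * n a) ->
      forall mu nu, is_state d (@starC R) (@absC R) mu ->
        is_state d (@starC R) (@absC R) nu ->
        (mk d (@starC R) (@absC R) (L_CX d (@absC R) n) mu nu
           <= (N * diam d)%:E)%E).
Proof.
move=> Hd Hc; split.
  move=> A star nrm HA phi Hphi n M N hn M0 N0 hM hN; split.
  - move=> mu nu Hmu Hnu; apply: mk_le => a ca sa.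
    rewrite /L_CX ge_max => /andP [hl hinf]; rewrite lee_fin in hinf.
    have hL := lip_bound HA Hd Hc N0 hN hl.
    apply/ler_addgt0Pr => e e0.
    have e2 : 0 < e / 2 by apply: divr_gt0.
    have lt1 : 1 < 1 + e / 2 by lra.
    move: hinf; set S := (X in inf X) => hinf.
    have hne : (S !=set0)%classic.
      exists (supnorm nrm (fun x => a x - 0)), (fun _ => 0); split => //.
        exact: (cont_const d HA 0).
      by move=> x; exists 0; rewrite scale0r.
    have [v [b [cb hbs] <-] hv] := inf_lt hne (le_lt_trans hinf lt1).
    have hs : forall y, exists l : R, nrm (a y - sc A l) <= 1 + e / 2.
      move=> y; have [z hz] := hbs y; exists (complex.Re z).
      apply: le_trans (nrm_Re_approx HA z (sa y)) _; rewrite -hz.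
      apply: ltW; apply: le_lt_trans hv; apply: (sup_bound HA Hc (f := fun x => a x - b x)).
      exact: (cont_sub HA ca cb).
    have s0 : 0 <= 1 + e / 2 by lra.
    have := main_bound HA Hc Hmu Hnu ca sa s0 hs hL.
    have : e / 2 * 2 = e by rewrite divfK.
    move=> he h; apply: le_trans h _; lra.
  - move=> mu nu Hmu Hnu; apply: mk_le => a ca sa.
    rewrite /L_C ge_max => /andP [hl hinf]; rewrite lee_fin in hinf.
    apply/ler_addgt0Pr => e e0.
    have e2 : 0 < e / 2 by apply: divr_gt0.
    have lt1 : 1 < 1 + e / 2 by lra.
    move: hinf; set S := (X in inf X) => hinf.
    have hne : (S !=set0)%classic by exists (supnorm nrm (fun x => a x - 0 *: 1)), 0.
    have [v [lam _ <-] hv] := inf_lt hne (le_lt_trans hinf lt1).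
    set l := complex.Re lam.
    have hs : forall y, nrm (a y - sc A l) <= 1 + e / 2.
      move=> y; apply: le_trans (nrm_Re_approx HA lam (sa y)) _.
      apply: ltW; apply: le_lt_trans hv; apply: (sup_bound HA Hc (f := fun x => a x - lam *: 1)).
      exact: (cont_sub HA ca (cont_const d HA _)).
    have hT : `|l| <= `|l| by [].
    have he : e / 2 * 2 = e by rewrite divfK.
    apply: (le_trans (@two_sided _ _ _ _ _ _ HA mu nu Hmu Hnu a `|l| (l + (1 + e / 2)) (2 * (1 + e / 2)) ca sa _ _)).
    * by move=> x; have [h1 _] := near_bounds HA (hs x) hT.
    * move=> x; have [_ h2] := near_bounds HA (hs x) hT.
      by apply: le_trans h2 _; lra.
    * lra.
  - move=> mu nu Hmu Hnu; apply: mk_le => a ca sa.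
    rewrite /L_phi ge_max => /andP [hl hsup]; rewrite lee_fin in hsup.
    have [K hK] := cont_bounded HA Hc ca.
    have hb0 : forall x, nrm (sc A 0 + a x) <= 0 + K.
      by move=> x; rewrite /sc rC0 scale0r !add0r.
    have [hI _] := stateG HA Hphi ca sa hb0.
    set l := complex.Re (phi a).
      have hpl : phi a = rC l by rewrite /l; move: hI; case: (phi a) => p q /= ->.
      have hs : forall y, nrm (a y - sc A l) <= 1.
        move=> y; apply: le_trans hsup; rewrite /sc -hpl.
        apply: (sup_bound HA Hc (f := fun x => a x - phi a *: 1)).
        exact: (cont_sub HA ca (cont_const d HA _)).
      have hT : `|l| <= `|l| by [].
      apply: (@two_sided _ _ _ _ _ _ HA mu nu Hmu Hnu a `|l| (l + 1) 2 ca sa).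
      * by move=> x; have [h1 _] := near_bounds HA (hs x) hT.
      * move=> x; have [_ h2] := near_bounds HA (hs x) hT.
        by apply: le_trans h2 _; lra.
move=> phi Hphi n M N hn M0 N0 hM hN mu nu Hmu Hnu.
have HA := C_Cstar R.
apply: mk_le => a ca sa.
rewrite /L_CX ge_max => /andP [hl _].
have hL := lip_bound HA Hd Hc N0 hN hl.
have hs : forall y, exists l : R, absC (a y - sc (R[i]^o) l) <= 0.
  move=> y; exists (complex.Re (a y)).
  have : complex.Im (a y) = 0.
    have := sa y; rewrite /starC; case: (a y) => p q /= [] /eqP.
    by move/eqP; lra.
  rewrite /sc; case: (a y) => p q /= ->.
  by rewrite mulr1 !mulr0 !mul0r subr0 subrr !addr0 subrr expr0n /= addr0 sqrtr0.
have := main_bound HA Hc Hmu Hnu ca sa (lexx 0) hs hL.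
by rewrite mulr0 add0r.
Qed.
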